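(* Let $G$ be a connected graph of order $n$ with exactly $k$ cut edges. If $SO(G)$ is maximum among all connected graphs of order $n$ with exactly $k$ cut edges, then every cut edge of $G$ is pendent (has an end vertex of degree one).
   Context: For a graph $G$, $d_G(w)$ denotes the degree of vertex $w$, and the Sombor index is $SO(G)=\sum_{ab\in E(G)}\sqrt{d_G(a)^2+d_G(b)^2}$. A cut edge is an edge whose deletion disconnects the graph. *)

(* Defs.v *)
From HB Require Import structures.
From mathcomp Require Import all_boot all_order all_algebra.
From mathcomp Require Import reals.
Set Implicit Arguments. Unset Strict Implicit. Unset Printing Implicit Defensive.
Import Order.TTheory GRing.Theory Num.Theory.

Definition simple_graph (n : nat) (g : rel 'I_n) : Prop :=
  symmetric g /\ irreflexive g.

Definition connected_graph (n : nat) (g : rel 'I_n) : Prop :=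
  forall a b : 'I_n, connect g a b.

Definition deg (n : nat) (g : rel 'I_n) (a : 'I_n) : nat := #|[set b | g a b]|.

(* each edge {a,b} is represented once, by the ordered pair with a < b *)
Definition edges (n : nat) (g : rel 'I_n) : {set 'I_n * 'I_n} :=
  [set p : 'I_n * 'I_n | (p.1 < p.2)%N && g p.1 p.2].

Definition remove_edge (n : nat) (g : rel 'I_n) (a b : 'I_n) : rel 'I_n :=
  [rel x y | g x y && ~~ (((x == a) && (y == b)) || ((x == b) && (y == a)))].

Definition is_cut_edge (n : nat) (g : rel 'I_n) (a b : 'I_n) : Prop :=
  g a b /\ ~ connected_graph (remove_edge g a b).

Definition num_cut_edges (n : nat) (g : rel 'I_n) : nat :=
  #|[set p in edges g |
       ~~ [forall x : 'I_n, forall y : 'I_n, connect (remove_edge g p.1 p.2) x y]]|.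

Definition sombor (R : realType) (n : nat) (g : rel 'I_n) : R :=
  (\sum_(p in edges g)
     Num.sqrt (((deg g p.1)%:R ^+ 2 + (deg g p.2)%:R ^+ 2) : R))%R.

(* Main.v *)
Require Import Defs.
From HB Require Import structures.
From mathcomp Require Import all_boot all_order all_algebra.
From mathcomp Require Import reals.
From mathcomp Require Import zify.
Import Order.TTheory GRing.Theory Num.Theory.
Set Implicit Arguments. Unset Strict Implicit. Unset Printing Implicit Defensive.

Lemma connect_map (T U : finType) (r : rel T) (r' : rel U) (h : T -> U) :
  (forall z w, r z w -> h z = h w \/ r' (h z) (h w)) ->
  forall x y, connect r x y -> connect r' (h x) (h y).
Proof.
move=> H x y /connectP [p pth ->] {y}.
elim: p x pth => [|z p IH] x /=; first by move=> _; exact: connect0.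
case/andP=> rxz /IH Hz; apply: connect_trans _ Hz.
by case: (H _ _ rxz) => [->|e]; [exact: connect0 | exact: connect1].
Qed.

Lemma remove_sym n (g : rel 'I_n) : symmetric g -> forall a b, symmetric (remove_edge g a b).
Proof.
move=> sg a b x y; rewrite /remove_edge /= sg; congr (_ && ~~ _).
by rewrite orbC [(y == a) && _]andbC [(y == b) && _]andbC.
Qed.

Lemma remove_swap n (g : rel 'I_n) a b : remove_edge g a b =2 remove_edge g b a.
Proof. by move=> x y; rewrite /remove_edge /= orbC. Qed.

Lemma cutE n (g : rel 'I_n) a b : symmetric g -> connected_graph g -> g a b ->
  [forall x, forall y, connect (remove_edge g a b) x y] = connect (remove_edge g a b) a b.
Proof.
move=> sg cg gab; apply/idP/idP.
  by move/forallP/(_ a)/forallP/(_ b).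
move=> cab; apply/forallP=> x; apply/forallP=> y.
apply: connect_sub (cg x y) => {x y} x y gxy.
case: (boolP ((x == a) && (y == b) || (x == b) && (y == a))) =>
  [/orP[/andP[/eqP-> /eqP->]|/andP[/eqP-> /eqP->]] // | ne].
  by rewrite (sym_connect_sym (remove_sym sg a b)).
by apply: connect1; rewrite /remove_edge /= gxy ne.
Qed.

Lemma connect_inv (T : finType) (r : rel T) (P : pred T) :
  (forall z w, r z w -> P z = P w) -> forall x y, connect r x y -> P x = P y.
Proof.
move=> H x y /connectP [p pth ->] {y}.
elim: p x pth => [|z p IH] x //= /andP [rxz /IH <-]; exact: H.
Qed.

Lemma dbl (V : Type) (idx : V) (op : Monoid.com_law idx) n (r : rel 'I_n)
    (F : 'I_n * 'I_n -> V) :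
  symmetric r -> irreflexive r -> (forall x y, F (x,y) = F (y,x)) ->
  \big[op/idx]_(p | r p.1 p.2) F p =
  op (\big[op/idx]_(p in edges r) F p) (\big[op/idx]_(p in edges r) F p).
Proof.
move=> sr ir sF.
rewrite (bigID (fun p : 'I_n * 'I_n => (p.1 < p.2)%N)) /=.
congr (op _ _).
  by apply: eq_bigl => p; rewrite /edges inE andbC.
rewrite (reindex_inj (h := fun p : 'I_n*'I_n => (p.2, p.1))) /=; last first.
  by case=> ? ? [] ? ? [-> ->].
apply: eq_big => [[x y]|[x y] _] /=; last by rewrite sF.
rewrite /edges inE /= sr; case rxy: (r x y); rewrite ?andbF //=.
case: (ltngtP x y) => // /val_inj exy; by rewrite exy ir in rxy.
Qed.

Definition fm n (a b x : 'I_n) := if x == b then a else x.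
Definition abe n (a b x y : 'I_n) := ((x == a) && (y == b)) || ((x == b) && (y == a)).
Definition gp n (g : rel 'I_n) (a b : 'I_n) : rel 'I_n := fun x y =>
  ((x != b) && (y != b) && (x != y) &&
    [exists z, exists w, [&& fm a b z == x, fm a b w == y & g z w]])
  || abe a b x y.
Definition Psi n (a b : 'I_n) (p : 'I_n * 'I_n) :=
  if abe a b p.1 p.2 then p else (fm a b p.1, fm a b p.2).

Lemma fm_eq n (a b v v' : 'I_n) : fm a b v = fm a b v' ->
  v = v' \/ (v = a /\ v' = b) \/ (v = b /\ v' = a).
Proof.
rewrite /fm; case: eqP => [->|vb]; case: eqP => [->|v'b]; auto.
Qed.

Lemma fm_nb n (a b v : 'I_n) : a != b -> fm a b v != b.
Proof. by move=> ab; rewrite /fm; case: ifP => [_|/negbT]. Qed.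

Lemma K n (g : rel 'I_n) a b : symmetric g -> irreflexive g ->
  (forall y, g a y -> g b y -> False) ->
  forall z w x y, g z w -> g x y -> ~~ abe a b z w -> ~~ abe a b x y ->
  fm a b z = fm a b x -> fm a b w = fm a b y -> z = x /\ w = y.
Proof.
move=> sg ig ncn z w x y gzw gxy nz nx /fm_eq e1 /fm_eq e2.
have ncn' : forall u, g u a -> g u b -> False.
  by move=> u; rewrite ![g u _]sg; apply: ncn.
case: e1 => [?|[[??]|[??]]]; case: e2 => [?|[[??]|[??]]]; subst => //;
  rewrite ?ig in gzw gxy => //;
  try by move: nz nx; rewrite /abe !eqxx ?orbT ?andbT.
all: exfalso; by eauto.
Qed.

Lemma abe_sym n (a b x y : 'I_n) : abe a b x y = abe a b y x.
Proof. by rewrite /abe orbC; congr orb; apply: andbC. Qed.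

Lemma fm_abe n (a b z w : 'I_n) : a != b -> abe a b z w -> fm a b z = fm a b w.
Proof.
move=> ab; rewrite /abe /fm => /orP[] /andP[/eqP-> /eqP->];
  by rewrite eqxx (negbTE ab).
Qed.

Lemma gp_intro n (g : rel 'I_n) a b x y z w : x != b -> y != b -> x != y ->
  g z w -> fm a b z = x -> fm a b w = y -> gp g a b x y.
Proof.
move=> xb yb xy gzw e1 e2; apply/orP; left; rewrite xb yb xy /=.
by apply/existsP; exists z; apply/existsP; exists w; rewrite e1 e2 !eqxx.
Qed.

Lemma gp_sym n (g : rel 'I_n) a b : symmetric g -> symmetric (gp g a b).
Proof.
move=> sg.
suff H : forall x y, gp g a b x y -> gp g a b y x.
  by move=> x y; apply/idP/idP; apply: H.
move=> x y /orP[/andP[/andP[/andP[xb yb] xy] /existsP[z /existsP[w /and3P[/eqP e1 /eqP e2 gzw]]]] | ab'].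
  by apply: (gp_intro (z := w) (w := z)); rewrite // 1?eq_sym // sg.
by apply/orP; right; rewrite abe_sym.
Qed.

Lemma gp_irr n (g : rel 'I_n) a b : a != b -> irreflexive (gp g a b).
Proof.
move=> ab x; apply/negbTE; apply/negP => /orP[/andP[/andP[_]]|]; first by rewrite eqxx.
rewrite /abe => /orP[] /andP[/eqP e1 /eqP e2]; by rewrite -e1 e2 eqxx in ab.
Qed.

Lemma gp_map n (g : rel 'I_n) a b : irreflexive g -> a != b ->
  forall z w, g z w -> ~~ abe a b z w -> gp g a b (fm a b z) (fm a b w).
Proof.
move=> ig ab z w gzw nz; apply: (gp_intro (z := z) (w := w)) => //; rewrite ?fm_nb //.
apply/eqP => /fm_eq [e|[[e1 e2]|[e1 e2]]]; subst.
- by rewrite ig in gzw.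
- by rewrite /abe !eqxx in nz.
- by rewrite /abe !eqxx orbT in nz.
Qed.

Lemma gp_abe n (g : rel 'I_n) a b x y : abe a b x y -> gp g a b x y.
Proof. by move=> h; apply/orP; right. Qed.

Lemma gp_conn n (g : rel 'I_n) a b : irreflexive g -> a != b ->
  connected_graph g -> connected_graph (gp g a b).
Proof.
move=> ig ab cg x y.
have lnk : forall v, connect (gp g a b) v (fm a b v) /\ connect (gp g a b) (fm a b v) v.
  move=> v; rewrite /fm; case: ifP => [/eqP->|_]; last by split; apply: connect0.
  by split; apply: connect1; apply: gp_abe; rewrite /abe !eqxx ?orbT.
apply: connect_trans (proj1 (lnk x)) _; apply: connect_trans _ (proj2 (lnk y)).
apply: connect_map (cg x y) => z w gzw.
case: (boolP (abe a b z w)) => [/(fm_abe ab)|nz]; first by left.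
by right; apply: gp_map.
Qed.

Lemma cut_fwd n (g : rel 'I_n) a b : symmetric g -> irreflexive g -> a != b ->
  (forall y, g a y -> g b y -> False) ->
  forall x y, g x y -> ~~ abe a b x y ->
  connect (remove_edge g x y) x y ->
  connect (remove_edge (gp g a b) (fm a b x) (fm a b y)) (fm a b x) (fm a b y).
Proof.
move=> sg ig ab ncn x y gxy nx; apply: connect_map => z w.
rewrite /remove_edge /= => /andP[gzw nzw].
case: (boolP (abe a b z w)) => [/(fm_abe ab)|nz]; first by left.
right; rewrite gp_map //=; apply/negP => /orP[] /andP[/eqP e1 /eqP e2].
  have [??] := K sg ig ncn gzw gxy nz nx e1 e2; subst.
  by rewrite !eqxx in nzw.
have gyx : g y x by rewrite sg.
have nyx : ~~ abe a b y x by rewrite abe_sym.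
have [??] := K sg ig ncn gzw gyx nz nyx e1 e2; subst.
by rewrite !eqxx orbT in nzw.
Qed.

Lemma cut_bwd n (g : rel 'I_n) a b : symmetric g -> g a b ->
  forall x y, ~~ abe a b x y ->
  connect (remove_edge (gp g a b) (fm a b x) (fm a b y)) (fm a b x) (fm a b y) ->
  connect (remove_edge g x y) x y.
Proof.
move=> sg gab x y nx c.
have eab : forall u v, abe a b u v -> remove_edge g x y u v.
  move=> u v; rewrite /abe => /orP[] /andP[/eqP-> /eqP->];
  rewrite /remove_edge /= ?gab ?(sg b a) ?gab /=; apply: contra nx;
  by case/orP => /andP[/eqP<- /eqP<-]; rewrite /abe !eqxx ?orbT.
have lnk : forall v, connect (remove_edge g x y) v (fm a b v) /\
                     connect (remove_edge g x y) (fm a b v) v.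
  move=> v; rewrite /fm; case: ifP => [/eqP->|_]; last by split; apply: connect0.
  by split; apply: connect1; apply: eab; rewrite /abe !eqxx ?orbT.
apply: connect_trans (proj1 (lnk x)) _; apply: connect_trans _ (proj2 (lnk y)).
apply: connect_sub c => z' w'; rewrite /remove_edge /= => /andP[gzw nm].
case/orP: gzw => [/andP[_ /existsP[z /existsP[w /and3P[/eqP e1 /eqP e2 gzw]]]] | ab'].
  subst z' w'.
  apply: connect_trans (proj2 (lnk z)) _; apply: connect_trans _ (proj1 (lnk w)).
  apply: connect1; rewrite /remove_edge /= gzw /=; apply: contra nm.
  by case/orP => /andP[/eqP-> /eqP->]; rewrite !eqxx ?orbT.
by apply: connect1; apply: eab.
Qed.

Definition C n (r : rel 'I_n) (p : 'I_n * 'I_n) : bool :=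
  ~~ [forall x, forall y, connect (remove_edge r p.1 p.2) x y].

Lemma C_swap n (r : rel 'I_n) x y : C r (x, y) = C r (y, x).
Proof.
rewrite /C /=; congr negb; apply: eq_forallb => u; apply: eq_forallb => v.
by apply: eq_connect; apply: remove_swap.
Qed.

Lemma C_pres n (g : rel 'I_n) a b : symmetric g -> irreflexive g -> a != b -> g a b ->
  (forall y, g a y -> g b y -> False) -> connected_graph g ->
  forall x y, g x y -> ~~ abe a b x y -> C g (x, y) = C (gp g a b) (Psi a b (x, y)).
Proof.
move=> sg ig ab gab ncn cg x y gxy nx.
rewrite /Psi /= (negbTE nx) /C /= cutE // cutE //; last first.
- exact: gp_map.
- exact: gp_conn.
- exact: gp_sym.
congr negb; apply/idP/idP; [exact: cut_fwd | exact: cut_bwd].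
Qed.

Lemma C_gp_ab n (g : rel 'I_n) a b : symmetric g -> irreflexive g -> a != b ->
  connected_graph g -> C (gp g a b) (a, b).
Proof.
move=> sg ig ab cg; rewrite /C /= cutE //; last first.
- by apply: gp_abe; rewrite /abe !eqxx.
- exact: gp_conn.
- exact: gp_sym.
have inv : forall z w, remove_edge (gp g a b) a b z w -> (z == b) = (w == b).
  move=> z w; rewrite /remove_edge /= => /andP[/orP[/andP[/andP[/andP[zb wb] _] _]|ab'] nm].
    by rewrite (negbTE zb) (negbTE wb).
  move: ab' nm; rewrite /abe => /orP[] /andP[/eqP-> /eqP->]; by rewrite !eqxx ?orbT.
apply/negP => /(connect_inv inv) /=.
by rewrite eqxx (negbTE ab).
Qed.

Lemma numE n (r : rel 'I_n) : num_cut_edges r = \sum_(p in edges r) (C r p : nat).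
Proof.
rewrite /num_cut_edges -sum1_card [LHS]big_mkcond [RHS]big_mkcond /=.
apply: eq_bigr => p _; rewrite inE.
by rewrite /C; case: (p \in edges r) => //=; case: (~~ _).
Qed.

Lemma reindex_Psi (V : Type) (idx : V) (op : Monoid.com_law idx) n (g : rel 'I_n) a b
  (F : 'I_n * 'I_n -> V) :
  symmetric g -> irreflexive g -> a != b -> g a b -> (forall y, g a y -> g b y -> False) ->
  \big[op/idx]_(p | gp g a b p.1 p.2) F p = \big[op/idx]_(p | g p.1 p.2) F (Psi a b p).
Proof.
move=> sg ig ab gab ncn.
have hb : forall v, (fm a b v == b) = false by move=> v; apply/negbTE/fm_nb.
have -> : \big[op/idx]_(p | gp g a b p.1 p.2) F p =
          \big[op/idx]_(p in [set p | gp g a b p.1 p.2]) F p.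
  by apply: eq_bigl => p; rewrite inE.
have -> : [set p | gp g a b p.1 p.2] = Psi a b @: [set p | g p.1 p.2].
  apply/setP => -[x y]; rewrite inE /=; apply/idP/imsetP.
    case/orP => [/andP[/andP[/andP[xb yb] xy] /existsP[z /existsP[w /and3P[/eqP e1 /eqP e2 gzw]]]] | ab'].
      have nz : ~~ abe a b z w.
        by apply: contra xy => /(fm_abe ab); rewrite e1 e2 => ->.
      by exists (z, w); rewrite ?inE // /Psi /= (negbTE nz) e1 e2.
    exists (x, y); last by rewrite /Psi /= ab'.
    rewrite inE /=; move: ab'; rewrite /abe => /orP[] /andP[/eqP-> /eqP->] //.
    by rewrite sg.
  case=> -[z w]; rewrite inE /= => gzw e.
  have -> : x = (Psi a b (z, w)).1 by rewrite -e.
  have -> : y = (Psi a b (z, w)).2 by rewrite -e.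
  rewrite /Psi /=.
  case: (boolP (abe a b z w)) => [nz|nz]; first by apply: gp_abe.
  exact: gp_map.
rewrite big_imset /=; first by apply: eq_bigl => p; rewrite inE.
move=> [x y] [x' y']; rewrite !inE /= => gxy gxy'; rewrite /Psi /=.
case: (boolP (abe a b x y)) => nx; case: (boolP (abe a b x' y')) => nx' //.
- by case=> ex ey; move: nx; rewrite /abe ex ey !hb !andbF.
- by case=> ex ey; move: nx'; rewrite /abe -ex -ey !hb !andbF.
case=> e1 e2; have [-> ->] := K sg ig ncn gxy gxy' nx nx' e1 e2; done.
Qed.

Lemma deg_gp_b n (g : rel 'I_n) a b : a != b -> deg (gp g a b) b = 1%N.
Proof.
move=> ab; rewrite /deg (_ : [set w | gp g a b b w] = [set a]) ?cards1 //.
apply/setP => w; rewrite !inE /gp /abe eqxx /= (eq_sym b a) (negbTE ab) /=.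
by rewrite eq_sym.
Qed.

Lemma deg_gp_a n (g : rel 'I_n) a b : symmetric g -> irreflexive g -> a != b -> g a b ->
  (forall y, g a y -> g b y -> False) ->
  (deg g a + deg g b <= (deg (gp g a b) a).+1)%N.
Proof.
move=> sg ig ab gab ncn.
set A := [set w | g a w]; set B := [set w | g b w] :\ a.
have AB0 : A :&: B = set0.
  apply/setP => w; rewrite !inE; apply/negbTE/negP => /and3P[gaw _ gbw].
  exact: ncn gaw gbw.
have dB : deg g b = (#|B|).+1.
  by rewrite /deg (cardsD1 a) inE sg gab.
have sub : A :|: B \subset [set w | gp g a b a w].
  apply/subsetP => w; rewrite !inE => /orP[gaw|/andP[wa gbw]].
    case: (eqVneq w b) => [->|wb]; first by apply: gp_abe; rewrite /abe !eqxx.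
    apply: (gp_intro (z := a) (w := w)) => //; rewrite /fm ?(negbTE ab) ?(negbTE wb) //.
    by apply: contraTneq gaw => <-; rewrite ig.
  have wb : w != b by apply: contraTneq gbw => ->; rewrite ig.
  apply: (gp_intro (z := b) (w := w)) => //; rewrite /fm ?eqxx ?(negbTE wb) //.
  by rewrite eq_sym.
have e := cardsUI A B; rewrite AB0 cards0 addn0 in e.
have le := subset_leq_card sub.
rewrite dB /deg -/A; lia.
Qed.

Lemma deg_gp_other n (g : rel 'I_n) a b : symmetric g -> irreflexive g -> a != b ->
  (forall y, g a y -> g b y -> False) ->
  forall v, v != a -> v != b -> (deg g v <= deg (gp g a b) v)%N.
Proof.
move=> sg ig ab ncn v va vb.
rewrite /deg -(card_in_imset (f := fm a b) (D := [set w | g v w])).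
  apply: subset_leq_card; apply/subsetP => w' /imsetP [w]; rewrite inE => gvw ->.
  rewrite ?inE; apply: (gp_intro (z := v) (w := w)) => //; rewrite ?fm_nb //.
  - rewrite /fm; case: ifP => _; first by [].
    by apply: contraTneq gvw => <-; rewrite ig.
  - by rewrite /fm (negbTE vb).
move=> w1 w2; rewrite !inE => g1 g2 /fm_eq [//|[[??]|[??]]]; subst.
- by case: (ncn v); rewrite sg.
- by case: (ncn v); rewrite sg.
Qed.

Lemma deg_pos n (g : rel 'I_n) x y : g x y -> (0 < deg g x)%N.
Proof. by move=> gxy; apply/card_gt0P; exists y; rewrite inE. Qed.

Lemma deg_le n (g : rel 'I_n) a b : symmetric g -> irreflexive g -> a != b -> g a b ->
  (forall y, g a y -> g b y -> False) ->
  forall v, (deg g v <= deg (gp g a b) (fm a b v))%N.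
Proof.
move=> sg ig ab gab ncn v.
have da := deg_gp_a sg ig ab gab ncn.
have pa := deg_pos gab; have pb : (0 < deg g b)%N by apply: (deg_pos (y := a)); rewrite sg.
rewrite /fm; case: (eqVneq v b) => [->|vb]; first by lia.
case: (eqVneq v a) => [->|va]; first by lia.
exact: deg_gp_other.
Qed.

Definition W (R : realType) n (r : rel 'I_n) (p : 'I_n * 'I_n) : R :=
  Num.sqrt (((deg r p.1)%:R ^+ 2 + (deg r p.2)%:R ^+ 2) : R).

Lemma W_swap (R : realType) n (r : rel 'I_n) x y : W R r (x, y) = W R r (y, x).
Proof. by rewrite /W /= addrC. Qed.

Lemma W_le (R : realType) n (g : rel 'I_n) a b : symmetric g -> irreflexive g -> a != b -> g a b ->
  (forall y, g a y -> g b y -> False) ->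
  forall x y, ~~ abe a b x y -> (W R g (x, y) <= W R (gp g a b) (Psi a b (x, y)))%R.
Proof.
move=> sg ig ab gab ncn x y nx.
rewrite /Psi /= (negbTE nx) /W /= ler_sqrt ?addr_ge0 ?exprn_ge0 ?ler0n //.
rewrite -!natrX -!natrD ler_nat leq_add // leq_exp2r //; exact: deg_le.
Qed.

Lemma W_lt (R : realType) n (g : rel 'I_n) a b : symmetric g -> irreflexive g -> a != b -> g a b ->
  (forall y, g a y -> g b y -> False) ->
  deg g a <> 1%N -> deg g b <> 1%N ->
  (W R g (a, b) < W R (gp g a b) (a, b))%R.
Proof.
move=> sg ig ab gab ncn da1 db1.
have da := deg_gp_a sg ig ab gab ncn.
have pa := deg_pos gab; have pb : (0 < deg g b)%N by apply: (deg_pos (y := a)); rewrite sg.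
rewrite /W /= ltr_sqrt; last by rewrite ltr_pwDr ?exprn_gt0 ?ltr0n ?deg_gp_b ?exprn_ge0 ?ler0n.
rewrite -!natrX -!natrD ltr_nat deg_gp_b //.
move: da1 db1 da pa pb; set x := deg g a; set y := deg g b; set z := deg _ a.
move=> *; nia.
Qed.

Lemma C_eq n (g : rel 'I_n) a b : symmetric g -> irreflexive g -> a != b -> g a b ->
  (forall y, g a y -> g b y -> False) -> connected_graph g ->
  ~~ connect (remove_edge g a b) a b ->
  forall p, g p.1 p.2 -> C (gp g a b) (Psi a b p) = C g p.
Proof.
move=> sg ig ab gab ncn cg cab [x y] /= gxy.
case: (boolP (abe a b x y)) => [ab'|nx]; last by rewrite (C_pres sg ig ab gab ncn cg gxy nx).
rewrite /Psi /= ab'.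
have h1 : C (gp g a b) (a, b) by apply: C_gp_ab.
have h2 : C g (a, b) by rewrite /C /= cutE.
move: ab'; rewrite /abe => /orP[] /andP[/eqP-> /eqP->]; first by rewrite h1 h2.
by rewrite C_swap h1 C_swap h2.
Qed.

Unset Implicit Arguments.

Theorem proposition3p2 (R : realType) (n k : nat) (g : rel 'I_n) :
  simple_graph g -> connected_graph g -> num_cut_edges g = k ->
  (forall g' : rel 'I_n, simple_graph g' -> connected_graph g' ->
     num_cut_edges g' = k -> (sombor R g' <= sombor R g)%R) ->
  forall a b : 'I_n, is_cut_edge g a b -> deg g a = 1%N \/ deg g b = 1%N.
Proof.
move=> [sg ig] cg hk hmax a b [gab ncut].
case: (eqVneq (deg g a) 1%N) => [|da1]; first by left.
case: (eqVneq (deg g b) 1%N) => [|db1]; first by right.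
exfalso.
have ab : a != b by apply: contraTneq gab => ->; rewrite ig.
have cab : ~~ connect (remove_edge g a b) a b.
  apply/negP => c; apply: ncut => x y.
  by move: c; rewrite -(cutE sg cg gab) => /forallP/(_ x)/forallP/(_ y).
have ncn : forall y, g a y -> g b y -> False.
  move=> y gay gby; apply: (negP cab).
  have yb : y != b by apply: contraTneq gby => ->; rewrite ig.
  have ya : y != a by apply: contraTneq gay => ->; rewrite ig.
  have c1 : connect (remove_edge g a b) a y.
    by apply: connect1; rewrite /remove_edge /= gay !eqxx (negbTE yb) (negbTE ab).
  have c2 : connect (remove_edge g a b) y b.
    by apply: connect1; rewrite /remove_edge /= (sg y b) gby !eqxx (negbTE yb) (negbTE ya) /=.
  exact: connect_trans c1 c2.
set g' := gp g a b.
have sg' : symmetric g' by apply: gp_sym.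
have ig' : irreflexive g' by apply: gp_irr.
have cg' : connected_graph g' by apply: gp_conn.
have hk' : num_cut_edges g' = k.
  have e1 : \sum_(p | g' p.1 p.2) (C g' p : nat) = num_cut_edges g' + num_cut_edges g'.
    by rewrite !numE; apply: dbl => // x y; rewrite C_swap.
  have e2 : \sum_(p | g p.1 p.2) (C g p : nat) = num_cut_edges g + num_cut_edges g.
    by rewrite !numE; apply: dbl => // x y; rewrite C_swap.
  have e3 : \sum_(p | g' p.1 p.2) C g' p = \sum_(p | g p.1 p.2) (C g p : nat).
    rewrite (reindex_Psi _ _ sg ig ab gab ncn).
    by apply: eq_bigr => p gp1; rewrite (C_eq sg ig ab gab ncn cg cab gp1).
  rewrite -hk; move: e1 e2 e3 => -> -> ; lia.
have := hmax g' (conj sg' ig') cg' hk'.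
apply/negP; rewrite -ltNge.
have e1 : (\sum_(p | g' p.1 p.2) W R g' p = sombor R g' + sombor R g')%R.
  by apply: dbl => //; apply: W_swap.
have e2 : (\sum_(p | g p.1 p.2) W R g p = sombor R g + sombor R g)%R.
  by apply: dbl => //; apply: W_swap.
suff : (sombor R g + sombor R g < sombor R g' + sombor R g')%R.
  by apply: contraTT; rewrite -!leNgt => h; apply: lerD.
rewrite -e1 -e2 (reindex_Psi _ _ sg ig ab gab ncn).
rewrite (bigD1 (a, b)) //= [X in (_ < X)%R](bigD1 (a, b)) //=.
have Pab : Psi a b (a, b) = (a, b) by rewrite /Psi /abe /= !eqxx.
rewrite Pab; apply: ltr_leD.
  by apply: W_lt => // /eqP; rewrite ?(negbTE da1) ?(negbTE db1).
apply: ler_sum => -[x y] /andP[gxy /= nab].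
case: (boolP (abe a b x y)) => [ab'|nx]; last by apply: W_le.
have : (x, y) = (b, a).
  move: ab' nab; rewrite /abe => /orP[] /andP[/eqP-> /eqP->] //; by rewrite eqxx.
case=> -> ->; rewrite /Psi /abe /= !eqxx orbT W_swap [X in (_ <= X)%R]W_swap.
apply: ltW; apply: W_lt => // /eqP; by rewrite ?(negbTE da1) ?(negbTE db1).
Qed.
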